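(* Let $(S,d)$ be a metric space and $\bullet\in\{\mathrm{FM},\mathrm{BL}\}$. For every molecular measure $\mu=\sum_{j=1}^n a_j\delta_{s_j}$ ($n\in\mathbb{N}$, $a_j\in\mathbb{R}$, $s_j\in S$) there exists $f^\mu_\bullet\in E^S_\bullet$ such that $\|\mu\|^*_\bullet=\int_S f^\mu_\bullet\,d\mu$.
   Context: $\mathrm{BL}(S)$ is the space of bounded real-valued Lipschitz functions on $S$, $|f|_L=\sup_{x\neq y}|f(x)-f(y)|/d(x,y)$ (with $|f|_L=0$ on a singleton), $\|f\|_{\mathrm{BL}}=\|f\|_\infty+|f|_L$, $\|f\|_{\mathrm{FM}}=\max(\|f\|_\infty,|f|_L)$, $B^S_\bullet=\{f\in\mathrm{BL}(S):\|f\|_\bullet\le1\}$, and for a finite signed measure $\mu$, $\|\mu\|^*_\bullet=\sup_{f\in B^S_\bullet}\int_S f\,d\mu$. Subsets $P\subset S$ carry the restricted metric; $\operatorname{ext}$ denotes extreme points and $\operatorname{ext}_*(B^P_\bullet)=\operatorname{ext}(B^P_\bullet)\setminus\{f:|f|=\mathbf{1}\}$. For non-empty $P\subset S$, $f\in\mathrm{BL}(P)$: $\mathcal{E}^{S,0}_P f(x)=\sup_{p\in P}[f(p)-|f|_L d(p,x)]$, $\mathcal{E}^S_P f=\max(\mathcal{E}^{S,0}_P f,-\|f\|_\infty)$. $E^S_{\mathrm{BL}}=\bigcup_{P\subset S\text{ finite}}\mathcal{E}^S_P(\operatorname{ext}_*(B^P_{\mathrm{BL}}))\cup\{\mathbf{1},-\mathbf{1}\}$;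 $E^S_{\mathrm{FM}}=\bigcup_{P\subset S\text{ finite}}\mathcal{E}^S_P(\operatorname{ext}_*(B^P_{\mathrm{FM}}))\cup\{f\in B^S_{\mathrm{FM}}:|f|=\mathbf{1}\}\cup\{h_P:P\subset S\text{ finite, non-empty}\}$, with $h_P(x)=\max\big(-1,\sup_{p\in P}[1-d(x,p)]\big)$. *)

(* Defs.v *)
From HB Require Import structures.
From mathcomp Require Import all_boot all_order all_algebra.
From mathcomp Require Import all_classical all_reals.


Unset Printing Implicit Defensive.
Import Order.TTheory GRing.Theory Num.Theory.
Local Open Scope ring_scope.
Local Open Scope classical_set_scope.

Inductive norm_kind := FM | BL.

Section MetricDefs.
Variable R : realType.

Definition is_metric (S : Type) (d : S -> S -> R) : Prop :=
  (forall x y, d x y = 0 <-> x = y) /\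
  (forall x y, d x y = d y x) /\
  (forall x y z, d x z <= d x y + d y z).

Section OnSpace.
Context {T : Type} (dT : T -> T -> R).

Definition sup_norm (f : T -> R) : R := sup [set `|f x| | x in [set: T]].

(* |f|_L (= 0 when T has at most one point, since sup set0 = 0) *)
Definition lip_const (f : T -> R) : R :=
  sup [set r | exists x y, x <> y /\ r = `|f x - f y| / dT x y].

Definition is_BL (f : T -> R) : Prop :=
  (exists M, forall x, `|f x| <= M) /\
  (exists L, forall x y, `|f x - f y| <= L * dT x y).

Definition normk (k : norm_kind) (f : T -> R) : R :=
  match k with
  | FM => Num.max (sup_norm f) (lip_const f)
  | BL => sup_norm f + lip_const f
  end.

Definition ball_k (k : norm_kind) (f : T -> R) : Prop :=
  is_BL f /\ normk k f <= 1.

End OnSpace.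

Definition ext_pt {T : Type} (B : (T -> R) -> Prop) (f : T -> R) : Prop :=
  B f /\ forall g h (t : R), B g -> B h -> 0 < t < 1 ->
    (forall x, f x = t * g x + (1 - t) * h x) -> (forall x, g x = h x).

Definition ext_star {T : Type} (B : (T -> R) -> Prop) (f : T -> R) : Prop :=
  ext_pt B f /\ ~ (forall x, `|f x| = 1).

Section Extension.
Context {S : Type} (d : S -> S -> R).

Definition restr_dist (P : set S) (x y : {z : S | P z}) : R :=
  d (proj1_sig x) (proj1_sig y).

Definition ext0 (P : set S) (f : {z : S | P z} -> R) (x : S) : R :=
  sup [set f q - lip_const (@restr_dist P) f * d (proj1_sig q) x
      | q in [set: {z : S | P z}]].

Definition ext_op (P : set S) (f : {z : S | P z} -> R) (x : S) : R :=
  Num.max (ext0 P f x) (- sup_norm f).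

Definition h_fun (P : set S) (x : S) : R :=
  Num.max (-1) (sup [set 1 - d x p | p in P]).

Definition E_set (k : norm_kind) (g : S -> R) : Prop :=
  match k with
  | BL =>
      (exists P : set S, finite_set P /\
         exists f, ext_star (ball_k (@restr_dist P) BL) f /\ g = ext_op P f)
      \/ g = (fun _ => 1) \/ g = (fun _ => -1)
  | FM =>
      (exists P : set S, finite_set P /\
         exists f, ext_star (ball_k (@restr_dist P) FM) f /\ g = ext_op P f)
      \/ (ball_k d FM g /\ forall x, `|g x| = 1)
      \/ (exists P : set S, finite_set P /\ P !=set0 /\ g = h_fun P)
  end.

(* molecular measure mu = sum_j a_j delta_{s_j}; integral of f *)
Definition mol_integral (n : nat) (a : 'I_n -> R) (s : 'I_n -> S) (f : S -> R) : R :=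
  \sum_(j < n) a j * f (s j).

Definition dual_norm (k : norm_kind) (n : nat) (a : 'I_n -> R) (s : 'I_n -> S) : R :=
  sup [set mol_integral n a s g | g in ball_k d k].

End Extension.
End MetricDefs.

(* Main.v *)
Require Import Defs.
From mathcomp Require Import all_boot all_order all_algebra.
From mathcomp Require Import all_classical all_reals.
From mathcomp Require Import all_analysis.
From mathcomp Require Import ring lra.
Import Order.TTheory GRing.Theory Num.Theory numFieldNormedType.Exports.
Local Open Scope ring_scope.
Local Open Scope classical_set_scope.
Set Warnings "-notation-overridden,-ambiguous-paths,-notation-incompatible-prefix".

Section SupLemmas.
Context {R : realType}.

Lemma sup_le_c {E : set R} (c : R) : 0 <= c -> (forall y, E y -> y <= c) -> sup E <= c.
Proof.
move=> c0 H; have [[y Ey]|E0] := pselect (E !=set0).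
  by apply: ge_sup; [exists y|].
have -> : E = set0 by apply/seteqP; split=> // y Ey; apply: E0; exists y.
by rewrite sup0.
Qed.

Lemma sup_ge_el (E : set R) (x c : R) : (forall y, E y -> y <= c) -> E x -> x <= sup E.
Proof. by move=> H Ex; apply: ub_le_sup => //; exists c. Qed.

Lemma sup_ge0 (E : set R) : (forall y, E y -> 0 <= y) -> 0 <= sup E.
Proof.
move=> H; have [hs|nhs] := pselect (has_sup E); last by rewrite sup_out.
case: hs => [[y Ey] hub]; apply: (le_trans (H _ Ey)).
by apply: ub_le_sup.
Qed.

Lemma sup_eq_max (E : set R) (x : R) : E x -> (forall y, E y -> y <= x) -> sup E = x.
Proof.
move=> Ex H; apply/eqP; rewrite eq_le; apply/andP; split.
  by apply: ge_sup => //; exists x.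
exact: (@sup_ge_el E x x H Ex).
Qed.
End SupLemmas.

Section Gen.
Context {R : realType} {T : Type} (dT : T -> T -> R).
Hypothesis dpos : forall x y, x <> y -> 0 < dT x y.
Hypothesis d0 : forall x, dT x x = 0.
Implicit Types f : T -> R.

Definition CondF (k : norm_kind) (f : T -> R) : Prop :=
  match k with
  | FM => (forall x, `|f x| <= 1) /\ (forall x y, `|f x - f y| <= dT x y)
  | BL => (forall x, `|f x| <= 1) /\
          (forall q x y, x <> y -> `|f q| + `|f x - f y| / dT x y <= 1)
  end.

Lemma sup_norm_ge0 f : 0 <= sup_norm R f.
Proof. by apply: sup_ge0 => y [x _ <-]. Qed.

Lemma lip_const_ge0 f : 0 <= lip_const R dT f.
Proof.
apply: sup_ge0 => y [x [z [xz ->]]].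
by apply: divr_ge0 => //; apply/ltW/dpos.
Qed.

Lemma le_sup_norm {f} : is_BL R dT f -> forall x, `|f x| <= sup_norm R f.
Proof.
move=> [[M HM] _] x; apply: (@sup_ge_el _ _ _ M); last by exists x.
by move=> y [z _ <-].
Qed.

Lemma le_lip {f} : is_BL R dT f -> forall x y, x <> y ->
  `|f x - f y| / dT x y <= lip_const R dT f.
Proof.
move=> [_ [L HL]] x y xy; apply: (@sup_ge_el _ _ _ L); last by exists x, y.
move=> r [u [v [uv ->]]]; have dp := @dpos u v uv.
by rewrite ler_pdivrMr.
Qed.

Lemma le_lip' {f} : is_BL R dT f -> forall x y,
  `|f x - f y| <= lip_const R dT f * dT x y.
Proof.
move=> hf x y; have [->|xy] := pselect (x = y).
  by rewrite subrr normr0 d0 mulr0.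
by rewrite -ler_pdivrMr ?dpos //; apply: le_lip.
Qed.

Lemma sup_norm_le f c : 0 <= c -> (forall x, `|f x| <= c) -> sup_norm R f <= c.
Proof. by move=> c0 H; apply: sup_le_c => // y [x _ <-]. Qed.

Lemma lip_le f L : 0 <= L -> (forall x y, x <> y -> `|f x - f y| / dT x y <= L) ->
  lip_const R dT f <= L.
Proof. by move=> L0 H; apply: sup_le_c => // r [x [y [xy ->]]]; apply: H. Qed.

Lemma ballP k f : ball_k R dT k f <-> CondF k f.
Proof.
split.
  move=> [hf hn].
  have h1 x : `|f x| <= 1.
    apply: (le_trans (le_sup_norm hf x)); apply: le_trans hn.
    case: k => /=; first by rewrite le_max lexx.
    by rewrite lerDl lip_const_ge0.
  case: k hn => /= hn; split => //.
    move=> x y; apply: (le_trans (le_lip' hf x y)).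
    rewrite ler_piMl //; last by apply: le_trans hn; rewrite le_max lexx orbT.
    have [->|xy] := pselect (x = y); first by rewrite d0.
    exact/ltW/dpos.
  move=> q x y xy; apply: le_trans hn; apply: lerD.
    exact: le_sup_norm.
  exact: le_lip.
move=> hc.
have hb : is_BL R dT f.
  split; first by exists 1; case: k hc => -[].
  exists 1 => x y; have [->|xy] := pselect (x = y).
    by rewrite subrr normr0 d0 mulr0.
  rewrite mul1r; case: k hc => -[h1 h2]; first exact: h2.
  have h3 : `|f x - f y| / dT x y <= 1.
    by apply: le_trans (h2 x x y xy); rewrite lerDr.
  by move: h3; rewrite ler_pdivrMr ?dpos // mul1r.
split => //; case: k hc => -[h1 h2] /=.
  rewrite ge_max; apply/andP; split; first exact: sup_norm_le.
  apply: lip_le => // x y xy; rewrite ler_pdivrMr ?dpos // mul1r; exact: h2.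
have [[x0 [y0 xy0]]|np] := pselect (exists x y : T, x <> y).
  have s1 : sup_norm R f <= 1 by apply: sup_norm_le.
  rewrite -lerBrDl; apply: lip_le; first by rewrite subr_ge0.
  move=> x y xy.
  suff : sup_norm R f <= 1 - `|f x - f y| / dT x y by move=> ?; lra.
  apply: sup_norm_le => [|q]; last by have := h2 q x y xy; lra.
  by have := h2 x x y xy; have := normr_ge0 (f x); lra.
have -> : lip_const R dT f = 0.
  rewrite /lip_const.
  have -> : [set r | exists x y, x <> y /\ r = `|f x - f y| / dT x y] = set0.
    by apply/seteqP; split => // r [x [y [xy _]]]; apply: np; exists x, y.
  exact: sup0.
by rewrite addr0; apply: sup_norm_le.
Qed.

End Gen.
Arguments lip_const_ge0 {R T dT} dpos f.
Arguments le_sup_norm {R T dT f}.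
Arguments le_lip {R T dT} dpos {f}.
Arguments le_lip' {R T dT} dpos d0 {f}.
Arguments ballP {R T dT} dpos d0 k f.

Section Topo.
Context {R : realType} {n : nat}.
Local Notation V := 'rV[R]_n.

Lemma cont_coord (i : 'I_n) : continuous (fun v : V => v ord0 i).
Proof. exact: coord_continuous. Qed.

Lemma cont_cst (c : R) : continuous (fun _ : V => c).
Proof. exact: cst_continuous. Qed.

Lemma cont_add {f g : V -> R} : continuous f -> continuous g ->
  continuous (fun v => f v + g v).
Proof. move=> cf cg v. have := continuousD (cf v) (cg v). exact. Qed.

Lemma cont_sub {f g : V -> R} : continuous f -> continuous g ->
  continuous (fun v => f v - g v).
Proof. move=> cf cg v. have := continuousB (cf v) (cg v). exact. Qed.

Lemma cont_mul {f g : V -> R} : continuous f -> continuous g ->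
  continuous (fun v => f v * g v).
Proof. move=> cf cg v. have := continuousM (cf v) (cg v). exact. Qed.

Lemma cont_norm {f : V -> R} : continuous f -> continuous (fun v => `|f v|).
Proof. move=> cf v. have := cvg_norm (cf v). exact. Qed.

Lemma cont_sum (I : Type) (r : seq I) (g : I -> V -> R) :
  (forall j, continuous (g j)) -> continuous (fun v => \sum_(j <- r) g j v).
Proof.
move=> cg; elim: r => [|j r IH].
  by under eq_fun do rewrite big_nil; exact: cont_cst.
by under eq_fun do rewrite big_cons; apply: cont_add.
Qed.

Lemma closed_lef (f : V -> R) (c : R) : continuous f -> closed [set v | f v <= c].
Proof.
move=> cf; have := @preimage_closed _ _ f [set x | x <= c] (fun x _ => cf x) (@closed_le _ c).
by [].
Qed.

Lemma closed_eqf (f : V -> R) (c : R) : continuous f -> closed [set v | f v = c].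
Proof.
move=> cf; have := @preimage_closed _ _ f [set x | x = c] (fun x _ => cf x) (@closed_eq _ c).
by [].
Qed.

Lemma closed_all (I : Type) (C : I -> V -> Prop) :
  (forall i, closed [set v | C i v]) -> closed [set v | forall i, C i v].
Proof.
move=> H; have := @closed_bigI _ I setT (fun i => [set v | C i v]) (fun i _ => H i).
suff -> : \bigcap_(i in setT) [set v | C i v] = [set v | forall i, C i v] by [].
by apply/seteqP; split => v /= hv i; [apply: hv|move=> _; apply: hv].
Qed.

Lemma closed_imp (P : Prop) (C : V -> Prop) : closed [set v | C v] ->
  closed [set v | P -> C v].
Proof.
move=> H; have [p|np] := pselect P.
  suff -> : [set v | P -> C v] = [set v | C v] by [].
  by apply/seteqP; split => v /= hv => [|//]; apply: hv.
suff -> : [set v | P -> C v] = setT by exact: closedT.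
by apply/seteqP; split => v //= _ /np.
Qed.

Lemma closed_and (A B : V -> Prop) : closed [set v | A v] -> closed [set v | B v] ->
  closed [set v | A v /\ B v].
Proof. by move=> ha hb; have := closedI ha hb. Qed.

End Topo.

Section Main.
Context {R : realType} {S : Type} (d : S -> S -> R) (hd : is_metric R S d).
Context (n : nat) (a : 'I_n -> R) (s : 'I_n -> S).

Lemma dd0 x : d x x = 0.
Proof. by case: hd => h _; apply/h. Qed.

Lemma dsym x y : d x y = d y x.
Proof. by case: hd => _ []. Qed.

Lemma dtri x y z : d x z <= d x y + d y z.
Proof. by case: hd => _ []. Qed.

Lemma dge0 x y : 0 <= d x y.
Proof.
have := dtri x y x; rewrite dd0 (dsym y x) => h.
by rewrite -(@pmulr_rge0 _ 2) // mulr2n mulrDl mul1r.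
Qed.

Lemma dpos x y : x <> y -> 0 < d x y.
Proof.
move=> xy; rewrite lt_def dge0 andbT; apply/eqP => h.
by apply: xy; case: hd => hh _; apply/hh.
Qed.

Definition Q : set S := range s.
Definition Qt := {z : S | Q z}.
Definition rd : Qt -> Qt -> R := restr_dist R d Q.

Lemma sig_eq (x y : Qt) : proj1_sig x = proj1_sig y -> x = y.
Proof.
case: x => x px; case: y => y py /= exy; subst y.
by rewrite (Prop_irrelevance px py).
Qed.

Lemma rd0 x : rd x x = 0.
Proof. exact: dd0. Qed.

Lemma rdpos x y : x <> y -> 0 < rd x y.
Proof. by move=> xy; apply: dpos => h; apply: xy; apply: sig_eq. Qed.

Definition sq (j : 'I_n) : Qt := exist Q (s j) (imageT s j).
Definition idx (z : Qt) : 'I_n := s2val (cid2 (proj2_sig z)).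

Lemma idxP z : s (idx z) = proj1_sig z.
Proof. by rewrite /idx; case: cid2. Qed.

Lemma sq_idx z : sq (idx z) = z.
Proof. by apply: sig_eq; rewrite /= idxP. Qed.

Definition Fv (v : 'rV[R]_n) : Qt -> R := fun z => v ord0 (idx z).
Definition Vf (f : Qt -> R) : 'rV[R]_n := \row_j f (sq j).
Definition Vg (g : S -> R) : 'rV[R]_n := \row_j g (s j).

Definition consis (v : 'rV[R]_n) := forall i j, s i = s j -> v ord0 i = v ord0 j.

Definition CondR (k : norm_kind) (v : 'rV[R]_n) : Prop :=
  (forall i, `|v ord0 i| <= 1) /\ consis v /\
  match k with
  | FM => forall i j, `|v ord0 i - v ord0 j| <= d (s i) (s j)
  | BL => forall q i j, s i <> s j ->
           `|v ord0 q| + `|v ord0 i - v ord0 j| / d (s i) (s j) <= 1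
  end.

Lemma CondR_closed k : closed [set v | CondR k v].
Proof.
apply: closed_and.
  apply: closed_all => i; apply: closed_lef; apply: cont_norm; exact: cont_coord.
apply: closed_and.
  apply: closed_all => i; apply: closed_all => j; apply: closed_imp.
  have := @closed_eqf R n (fun v => v ord0 i - v ord0 j) 0
    (cont_sub (cont_coord i) (cont_coord j)).
  suff -> : [set v : 'rV[R]_n | v ord0 i - v ord0 j = 0] = [set v | v ord0 i = v ord0 j] by [].
  apply/seteqP; split => v /= h; last by rewrite h subrr.
  by apply/eqP; rewrite -subr_eq0; apply/eqP.
case: k.
  apply: closed_all => i; apply: closed_all => j; apply: closed_lef.
  by apply: cont_norm; apply: cont_sub; apply: cont_coord.
apply: closed_all => q; apply: closed_all => i; apply: closed_all => j; apply: closed_imp.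
apply: closed_lef; apply: cont_add; first by apply: cont_norm; apply: cont_coord.
apply: cont_mul; last exact: cont_cst.
by apply: cont_norm; apply: cont_sub; apply: cont_coord.
Qed.

Lemma CondR_compact k : compact [set v | CondR k v].
Proof.
apply: (subclosed_compact (CondR_closed k)
  (@rV_compact _ n (fun=> `[(-1 : R), 1]%classic) (fun=> @segment_compact R _ _))).
move=> v [h1 _] i /=; have := h1 i; rewrite ler_norml => /andP[? ?].
by rewrite in_itv /=; apply/andP.
Qed.

Lemma CondF_Vf k f : CondF rd k f -> CondR k (Vf f).
Proof.
have sqe i j : s i = s j -> sq i = sq j by move=> h; apply: sig_eq.
have sqn i j : s i <> s j -> sq i <> sq j by move=> h e; apply: h; have := f_equal (@proj1_sig _ _) e.
case: k => -[h1 h2]; (split; first by move=> i; rewrite mxE h1).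
- split; first by move=> i j /sqe e; rewrite !mxE e.
  by move=> i j; rewrite !mxE; apply: h2.
- split; first by move=> i j /sqe e; rewrite !mxE e.
  by move=> q i j /sqn e; rewrite !mxE; apply: h2.
Qed.

Lemma CondR_Fv k v : CondR k v -> CondF rd k (Fv v).
Proof.
have ne x y : x <> y -> s (idx x) <> s (idx y).
  by move=> xy; rewrite !idxP => e; apply: xy; apply: sig_eq.
case: k => -[h1 [hc h2]]; (split; first by move=> x; apply: h1).
- move=> x y; rewrite /Fv /rd /restr_dist -!idxP; exact: h2.
- move=> q x y /ne xy; rewrite /Fv /rd /restr_dist -!idxP; exact: h2.
Qed.

Lemma Vf_Fv v : consis v -> Vf (Fv v) = v.
Proof.
move=> hc; apply/rowP => j; rewrite mxE /Fv; apply: hc.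
by rewrite idxP.
Qed.

Lemma Fv_Vf f : Fv (Vf f) = f.
Proof. by apply: funext => z; rewrite /Fv mxE sq_idx. Qed.

Lemma CondR_consis k v : CondR k v -> consis v.
Proof. by move=> [_ []]. Qed.

Definition Lv (v : 'rV[R]_n) : R := \sum_(j < n) a j * v ord0 j.
Definition Nv (v : 'rV[R]_n) : R := \sum_(j < n) v ord0 j * v ord0 j.

Lemma Lv_cont : continuous Lv.
Proof. apply: cont_sum => j; apply: cont_mul; [exact: cont_cst|exact: cont_coord]. Qed.

Lemma Nv_cont : continuous Nv.
Proof. apply: cont_sum => j; apply: cont_mul; exact: cont_coord. Qed.

Lemma mol_Vg g : mol_integral R n a s g = Lv (Vg g).
Proof. by apply: eq_bigr => j _; rewrite mxE. Qed.

Lemma CondF_Vg k g : CondF d k g -> CondR k (Vg g).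
Proof.
move=> h; have -> : Vg g = Vf (fun z => g (proj1_sig z)) by apply/rowP => j; rewrite !mxE.
apply: CondF_Vf; case: k h => -[h1 h2]; split => //.
by move=> q x y xy; apply: h2 => e; apply: xy; apply: sig_eq.
Qed.


Section ExtOp.
Variables (f : Qt -> R) (hf : is_BL R rd f).
Local Notation c := (sup_norm R f).
Local Notation L := (lip_const R rd f).
Local Notation E x := [set f q - L * d (proj1_sig q) x | q in [set: Qt]].

Lemma c_ge0 : 0 <= c. Proof. exact: sup_norm_ge0. Qed.
Lemma L_ge0 : 0 <= L. Proof. exact: (lip_const_ge0 rdpos). Qed.

Lemma E_ub x y : E x y -> y <= c.
Proof.
move=> [q _ <-]; have h := le_sup_norm hf q.
have : 0 <= L * d (proj1_sig q) x by apply: mulr_ge0; [exact: L_ge0|exact: dge0].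
by have := ler_norm (f q); lra.
Qed.

Lemma ext0_le x : ext0 R d Q f x <= c.
Proof. by apply: sup_le_c; [exact: c_ge0|exact: E_ub]. Qed.

Lemma ext_op_bound x : `|ext_op R d Q f x| <= c.
Proof.
rewrite ler_norml /ext_op le_max lexx orbT /= ge_max ext0_le /=.
by have := c_ge0; lra.
Qed.

Lemma ext0_lip x y : ext0 R d Q f x <= ext0 R d Q f y + L * d x y.
Proof.
have Ld : 0 <= L * d x y by apply: mulr_ge0; [exact: L_ge0|exact: dge0].
have [[q0 _]|ne] := pselect (exists q : Qt, True).
  apply: ge_sup; first by exists (f q0 - L * d (proj1_sig q0) x), q0.
  move=> r [q _ <-].
  have h1 : f q - L * d (proj1_sig q) y <= ext0 R d Q f y.
    by apply: (@sup_ge_el _ _ _ c); [exact: E_ub|exists q].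
  have h2 : L * d (proj1_sig q) y <= L * d (proj1_sig q) x + L * d x y.
    by rewrite -mulrDr ler_wpM2l ?L_ge0 // dtri.
  lra.
have e z : E z = set0.
  by apply/seteqP; split => // r [q _ _]; apply: ne; exists q.
by rewrite /ext0 !e sup0 add0r.
Qed.

Lemma ext_op_lip1 x y : ext_op R d Q f x <= ext_op R d Q f y + L * d x y.
Proof.
have Ld : 0 <= L * d x y by apply: mulr_ge0; [exact: L_ge0|exact: dge0].
rewrite /ext_op ge_max; apply/andP; split.
  apply: le_trans (ext0_lip x y) _; rewrite lerD2r le_max lexx //.
apply: le_trans (_ : _ <= Num.max (ext0 R d Q f y) (- c)) _.
  by rewrite le_max lexx orbT.
by rewrite lerDl.
Qed.

Lemma ext_op_lip x y : `|ext_op R d Q f x - ext_op R d Q f y| <= L * d x y.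
Proof.
rewrite ler_norml; have := ext_op_lip1 x y; have := ext_op_lip1 y x.
by rewrite dsym; lra.
Qed.

Lemma ext_op_at j : ext_op R d Q f (s j) = f (sq j).
Proof.
have e0 : ext0 R d Q f (s j) = f (sq j).
  apply: sup_eq_max.
    by exists (sq j) => //=; rewrite dd0 mulr0 subr0.
  move=> r [q _ <-]; have := le_lip' rdpos rd0 hf q (sq j).
  rewrite /rd /restr_dist /= => h.
  by have := ler_norm (f q - f (sq j)); lra.
rewrite /ext_op e0 max_l //.
by have := le_sup_norm hf (sq j); rewrite ler_norml => /andP[].
Qed.

Lemma ext_op_CondF k : CondF rd k f -> CondF d k (ext_op R d Q f).
Proof.
move=> hc; have hb : ball_k R rd k f by apply/(ballP rdpos rd0).
case: hb => _ hn.
have c1 : c <= 1.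
  apply: le_trans hn; case: k {hc} => /=; first by rewrite le_max lexx.
  by rewrite lerDl L_ge0.
case: k hc hn => -[h1 h2] hn /=; split.
- by move=> x; apply: le_trans (ext_op_bound x) c1.
- move=> x y; apply: le_trans (ext_op_lip x y) _.
  rewrite ler_piMl ?dge0 //; apply: le_trans hn; rewrite le_max lexx orbT //.
- by move=> x; apply: le_trans (ext_op_bound x) c1.
- move=> q x y xy; have dp := @dpos x y xy.
  apply: le_trans (_ : c + L <= 1) => //; apply: lerD; first exact: ext_op_bound.
  by rewrite ler_pdivrMr // ext_op_lip.
Qed.

End ExtOp.


Lemma Q_finite : finite_set Q.
Proof. exact: finite_image finite_finset. Qed.

Lemma CondR0 k : CondR k 0.
Proof.
split; first by move=> i; rewrite mxE normr0.
split; first by move=> i j _; rewrite !mxE.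
case: k => [i j|q i j _]; rewrite !mxE subrr normr0 ?dge0 //.
by rewrite mul0r addr0.
Qed.

Lemma exists_max k : exists v1, CondR k v1 /\ forall v, CondR k v -> Lv v <= Lv v1.
Proof.
have [v1 v1A H] := @compact_EVT_max _ R Lv [set v | CondR k v]
  (ex_intro _ 0 (CondR0 k)) (CondR_compact k) (@continuous_subspaceT _ _ _ _ Lv_cont).
exists v1; split; first exact: set_mem v1A.
by move=> v hv; apply: H; apply: mem_set.
Qed.

Lemma exists_ext k : exists v2, CondR k v2 /\ (forall v, CondR k v -> Lv v <= Lv v2)
  /\ (forall v, CondR k v -> Lv v = Lv v2 -> Nv v <= Nv v2).
Proof.
have [v1 [h1 h2]] := exists_max k.
have cA : compact ([set v | CondR k v] `&` [set v | Lv v = Lv v1]).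
  apply: compact_closedI; first exact: CondR_compact.
  exact: closed_eqf Lv_cont.
have [v2 v2A H] := @compact_EVT_max _ R Nv _
  (ex_intro _ v1 (conj h1 erefl)) cA (@continuous_subspaceT _ _ _ _ Nv_cont).
have [c2 e2] := set_mem v2A.
exists v2; split => //; split; first by move=> v hv; rewrite e2; apply: h2.
by move=> v hv ev; apply: H; apply: mem_set; split; [exact: hv|exact: (etrans ev e2)].
Qed.

Lemma Lv_comb (t : R) (u v w : 'rV[R]_n) :
  (forall j, u ord0 j = t * v ord0 j + (1 - t) * w ord0 j) ->
  Lv u = t * Lv v + (1 - t) * Lv w.
Proof.
move=> h; rewrite /Lv !mulr_sumr -big_split; apply: eq_bigr => j _.
by rewrite h /=; ring.
Qed.

Lemma Nv_comb (t : R) (u v w : 'rV[R]_n) :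
  (forall j, u ord0 j = t * v ord0 j + (1 - t) * w ord0 j) ->
  Nv u = t * Nv v + (1 - t) * Nv w
         - t * (1 - t) * \sum_(j < n) (v ord0 j - w ord0 j) ^+ 2.
Proof.
move=> h; rewrite /Nv !mulr_sumr -big_split -sumrB; apply: eq_bigr => j _.
by rewrite h /=; ring.
Qed.

Lemma ext_pt_Fv k v2 : CondR k v2 -> (forall v, CondR k v -> Lv v <= Lv v2) ->
  (forall v, CondR k v -> Lv v = Lv v2 -> Nv v <= Nv v2) ->
  ext_pt R (ball_k R rd k) (Fv v2).
Proof.
move=> c2 hL hN; split; first by apply/(ballP rdpos rd0); apply: CondR_Fv.
move=> g h t /(ballP rdpos rd0) bg /(ballP rdpos rd0) bh /andP[t0 t1] hf.
have cg := @CondF_Vf k g bg; have ch := @CondF_Vf k h bh.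
have hv j : v2 ord0 j = t * Vf g ord0 j + (1 - t) * Vf h ord0 j.
  rewrite !mxE -hf; by rewrite -[in LHS](@Vf_Fv v2 (@CondR_consis k v2 c2)) mxE.
have eL := @Lv_comb t _ _ _ hv.
have lg := hL _ cg; have lh := hL _ ch.
have t1' : 0 < 1 - t by lra.
have eg : Lv (Vf g) = Lv v2.
  apply/eqP; rewrite eq_le lg /=.
  have : t * (Lv v2 - Lv (Vf g)) <= 0.
    have : 0 <= (1 - t) * (Lv v2 - Lv (Vf h)) by apply: mulr_ge0; lra.
    lra.
  by rewrite pmulr_rle0 //; lra.
have eh : Lv (Vf h) = Lv v2.
  apply/eqP; rewrite eq_le lh /=.
  have : (1 - t) * (Lv v2 - Lv (Vf h)) <= 0.
    have : 0 <= t * (Lv v2 - Lv (Vf g)) by apply: mulr_ge0; lra.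
    lra.
  by rewrite pmulr_rle0 //; lra.
have ng := hN _ cg eg; have nh := hN _ ch eh.
have eN := @Nv_comb t _ _ _ hv.
set D := \sum_(j < n) _ in eN.
have D0 : 0 <= D by apply: sumr_ge0 => j _; apply: sqr_ge0.
have tt : 0 < t * (1 - t) by apply: mulr_gt0.
have DD : t * (1 - t) * D <= 0.
  have : t * Nv (Vf g) <= t * Nv v2 by rewrite ler_pM2l.
  have : (1 - t) * Nv (Vf h) <= (1 - t) * Nv v2 by rewrite ler_pM2l.
  lra.
have De : D = 0.
  by apply/eqP; rewrite eq_le D0 andbT; move: DD; rewrite pmulr_rle0.
move=> x; rewrite -(sq_idx x).
have H0 := psumr_eq0P (fun j _ => sqr_ge0 (Vf g ord0 j - Vf h ord0 j)) De.
have := H0 (idx x) isT.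
rewrite !mxE => /eqP; rewrite sqrf_eq0 subr_eq0 => /eqP //.
Qed.


Lemma molM (v : 'rV[R]_n) (g : S -> R) : (forall j, g (s j) = v ord0 j) -> mol_integral R n a s g = Lv v.
Proof. by move=> H; rewrite mol_Vg; congr Lv; apply/rowP => j; rewrite mxE H. Qed.

Lemma norm1 (x : R) : `|x| = 1 -> x = 1 \/ x = -1.
Proof.
move=> h; have [x0|x0] := leP 0 x; first by left; rewrite -h ger0_norm.
by right; rewrite -h ltr0_norm ?opprK.
Qed.

Lemma E_ext k f : ext_star R (ball_k R rd k) f -> E_set R d k (ext_op R d Q f).
Proof.
by case: k => h; (left; exists Q; split; [exact: Q_finite|exists f; split]).
Qed.

Lemma vfP k v2 (c2 : CondR k v2) j : v2 ord0 j = Fv v2 (sq j).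
Proof. by rewrite -[in LHS](@Vf_Fv v2 (@CondR_consis k v2 c2)) mxE. Qed.

Lemma all1_BL v2 (c2 : CondR BL v2) (all1 : forall x, `|Fv v2 x| = 1) :
  exists g, E_set R d BL g /\ Lv v2 = mol_integral R n a s g.
Proof.
have [h1 h2] := @CondR_Fv BL v2 c2.
have cst x y : Fv v2 x = Fv v2 y.
  have [->//|xy] := pselect (x = y).
  have := h2 x x y xy; rewrite all1 => h.
  have : `|Fv v2 x - Fv v2 y| / rd x y <= 0 by lra.
  rewrite pmulr_lle0 ?invr_gt0 ?rdpos // normr_le0 subr_eq0 => /eqP //.
have [[j0 _]|nj] := pselect (exists j : 'I_n, True).
  exists (fun _ => Fv v2 (sq j0)); split.
    by right; case: (@norm1 _ (all1 (sq j0))) => ->; [left|right].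
  by apply/esym/molM => j; rewrite /= (@vfP BL v2 c2 j); exact: cst.
exists (fun _ => 1); split; first by right; left.
by apply/esym/molM => j; exfalso; apply: nj; exists j.
Qed.

Lemma all1_FM v2 (c2 : CondR FM v2) (all1 : forall x, `|Fv v2 x| = 1) :
  exists g, E_set R d FM g /\ Lv v2 = mol_integral R n a s g.
Proof.
have [h1 h2] := @CondR_Fv FM v2 c2.
set f := Fv v2 in h1 h2 all1 *.
have [[x1 fx1]|nx] := pselect (exists x, f x = 1).
  pose Pp := [set z | exists x : Qt, proj1_sig x = z /\ f x = 1].
  have hg j : h_fun R d Pp (s j) = f (sq j).
    rewrite /h_fun; case: (@norm1 _ (all1 (sq j))) => e; rewrite e.
      have -> : sup [set 1 - d (s j) p | p in Pp] = 1.
        apply: sup_eq_max.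
          by exists (s j); [exists (sq j)|rewrite dd0 subr0].
        by move=> r [p _ <-]; have := dge0 (s j) p; lra.
      by rewrite max_r // lerN10.
    rewrite max_l //; apply: ge_sup.
      by exists (1 - d (s j) (proj1_sig x1)), (proj1_sig x1) => //; exists x1.
    move=> r [p [x [<- fx]] <-].
    have := h2 x (sq j); rewrite fx e /rd /restr_dist /= dsym.
    have -> : 1 - -1 = 2 :> R by lra.
    rewrite ger0_norm //; lra.
  exists (h_fun R d Pp); split.
    right; right; exists Pp; split.
      apply: sub_finite_set Q_finite => z [x [<- _]]; exact: proj2_sig x.
    by split => //; exists (proj1_sig x1), x1.
  by apply/esym/molM => j; rewrite hg (@vfP FM v2 c2).
have fm1 x : f x = -1.
  by case: (@norm1 _ (all1 x)) => // e; exfalso; apply: nx; exists x.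
exists (fun _ => -1); split.
  right; left; split; last by move=> x; rewrite normrN1.
  apply/(ballP dpos dd0); split => [x|x y]; first by rewrite normrN1.
  by rewrite subrr normr0 dge0.
by apply/esym/molM => j; rewrite (@vfP FM v2 c2 j) -/f fm1.
Qed.

Lemma main_k k : exists f : S -> R, E_set R d k f /\
  dual_norm R d k n a s = mol_integral R n a s f.
Proof.
have [v2 [c2 [hL hN]]] := exists_ext k.
have cf : CondF rd k (Fv v2) := @CondR_Fv k v2 c2.
have bf : ball_k R rd k (Fv v2) by apply/(ballP rdpos rd0).
have hbf : is_BL R rd (Fv v2) := bf.1.
have g0j j : ext_op R d Q (Fv v2) (s j) = v2 ord0 j.
  by rewrite ext_op_at // (@vfP k v2 c2).
have dualM : dual_norm R d k n a s = Lv v2.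
  apply: sup_eq_max.
    exists (ext_op R d Q (Fv v2)); last exact: molM.
    by apply/(ballP dpos dd0); exact: ext_op_CondF.
  move=> r [g bg <-]; rewrite mol_Vg; apply: hL; apply: CondF_Vg.
  exact/(ballP dpos dd0).
rewrite dualM.
have ep := @ext_pt_Fv k v2 c2 hL hN.
have [all1|nall] := pselect (forall x, `|Fv v2 x| = 1).
  by destruct k; [apply: all1_FM|apply: all1_BL].
exists (ext_op R d Q (Fv v2)); split; last by rewrite (@molM v2 _ g0j).
by apply: E_ext; split.
Qed.

End Main.

Theorem proposition5p4 (R : realType) (S : Type) (d : S -> S -> R)
  (hd : is_metric R S d) (k : norm_kind) (n : nat) (a : 'I_n -> R) (s : 'I_n -> S) :
  exists f : S -> R, E_set R d k f /\ dual_norm R d k n a s = mol_integral R n a s f.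
Proof. exact: main_k. Qed.
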